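(* Let $R$ be a Noetherian ring of prime characteristic $p>0$, let $N\in\mathbb{N}$, and let $\{I_n\}_{n\in\mathbb{N}}$ be a collection of ideals of $R$ each generated by $N$ elements. Let $\mathcal{F}$ be a non-principal ultrafilter on $\mathbb{N}$. Then, as ideals of the ultrapower $R_\natural$, \[ \Big(\operatorname{ulim}_{n\to\mathcal{F}} I_n\Big)^F\subseteq \operatorname{ulim}_{n\to\mathcal{F}}\big(I_n^F\big). \]
   Context: A non-principal ultrafilter $\mathcal{F}$ on $\mathbb{N}$ is a collection of subsets of $\mathbb{N}$ not containing $\varnothing$, closed under supersets and finite intersections, containing $A$ or $\mathbb{N}\setminus A$ for every $A\subseteq\mathbb{N}$, and containing no finite set. The ultrapower $R_\natural$ is $\prod_{n\in\mathbb{N}}R$ modulo the relation $(a_n)\sim(b_n)$ iff $\{n\mid a_n=b_n\}\in\mathcal{F}$, with componentwise ring operations; the class of $(a_n)$ is written $\operatorname{ulim} a_n$. For ideals $I_n\subseteq R$, $\operatorname{ulim}_{n\to\mathcal{F}} I_n$ is the ideal of $R_\natural$ consisting of classes $\operatorname{ulim} a_n$ with $\{n\mid a_n\in I_n\}\in\mathcal{F}$. For an ideal $I$ of a ring $S$ of characteristic $p$, $I^{[p^e]}$ is the ideal generated by $\{r^{p^e}\mid r\in I\}$, and the Frobenius closure is $I^F=\{r\in S\mid r^{p^e}\in I^{[p^e]}\text{ for all } e\gg0\}$. *)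

(* Defs.v *)
From HB Require Import structures.
From mathcomp Require Import all_boot all_algebra.
From mathcomp Require Import boolp classical_sets functions.
Set Implicit Arguments.
Unset Strict Implicit.
Unset Printing Implicit Defensive.
Import GRing.Theory.
Local Open Scope ring_scope.
Local Open Scope quotient_scope.

Definition is_ideal (S : comNzRingType) (I : S -> Prop) : Prop :=
  I 0 /\ (forall x y, I x -> I y -> I (x + y)) /\ (forall a x, I x -> I (a * x)).

Definition ideal_span (S : comNzRingType) (A : S -> Prop) : S -> Prop :=
  fun x => exists s : seq (S * S),
    (forall pr, pr \in s -> A pr.2) /\ x = \sum_(pr <- s) pr.1 * pr.2.

Definition generated_by_N (S : comNzRingType) (N : nat) (I : S -> Prop) : Prop :=
  exists g : 'I_N -> S, forall r, I r <-> ideal_span (fun y => exists i, y = g i) r.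

Definition noetherian (S : comNzRingType) : Prop :=
  forall I : S -> Prop, is_ideal I ->
    exists s : seq S, forall r, I r <-> ideal_span (fun y => y \in s) r.

Definition frob_pow (S : comNzRingType) (I : S -> Prop) (q : nat) : S -> Prop :=
  ideal_span (fun y => exists r, I r /\ y = r ^+ q).

Definition frob_closure (S : comNzRingType) (p : nat) (I : S -> Prop) : S -> Prop :=
  fun r => exists e0 : nat, forall e : nat, (e0 <= e)%N -> frob_pow I (p ^ e) (r ^+ (p ^ e)).

Definition finite_natset (A : nat -> Prop) : Prop := exists m, forall n, A n -> (n < m)%N.

Record npuf := NPUF {
  uf_mem :> (nat -> Prop) -> Prop;
  uf_nonempty : ~ uf_mem (fun _ => False);
  uf_up : forall A B : nat -> Prop, uf_mem A -> (forall n, A n -> B n) -> uf_mem B;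
  uf_cap : forall A B : nat -> Prop, uf_mem A -> uf_mem B -> uf_mem (fun n => A n /\ B n);
  uf_ultra : forall A : nat -> Prop, uf_mem A \/ uf_mem (fun n => ~ A n);
  uf_nonprincipal : forall A : nat -> Prop, finite_natset A -> ~ uf_mem A
}.

Section Ultrapower.
Variables (R : comNzRingType) (F : npuf).

(* sequences equal to 0 F-almost everywhere: a ~ b iff a - b is in this ideal *)
Definition seqR : comNzRingType := GRing.ComNzRing.clone (nat -> R) _.

Definition nullseq : {pred seqR} := fun a => `[< F (fun n => a n = 0) >].

Lemma uf_full : F (fun _ => True).
Proof.
by case: (@uf_ultra F (fun _ => True)) => H; [|apply: (uf_up H)].
Qed.

Lemma nullseq_idealr : idealr_closed nullseq.
Proof.
split.
- apply/asboolP; apply: (uf_up uf_full) => n _; done.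
- apply/negP => /asboolP H; have H0 := @uf_nonempty F; apply: H0.
  apply: (uf_up H) => n /= h.
  have h1 : (1 : R) = 0 := h. by move: (oner_neq0 R); rewrite h1 eqxx.
- move=> a u v /asboolP Hu /asboolP Hv; apply/asboolP.
  apply: (uf_up (uf_cap Hu Hv)) => n [h1 h2] /=.
  have -> : (a * u + v) n = a n * u n + v n by []. by rewrite h1 h2 mulr0 addr0.
Qed.

HB.instance Definition _ := isIdealr.Build seqR nullseq nullseq_idealr.

Definition ultrapower : comNzRingType := {ideal_quot nullseq}.

Definition ulim (a : nat -> R) : ultrapower := \pi_ultrapower (a : seqR).

Definition ulim_ideal (I : nat -> R -> Prop) : ultrapower -> Prop :=
  fun x => exists a : nat -> R, x = ulim a /\ F (fun n => I n (a n)).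

End Ultrapower.

Arguments ultrapower R F : clear implicits.
Arguments ulim {R} F a.
Arguments ulim_ideal {R} F I x.

(* Main.v *)
Require Import Defs.
From HB Require Import structures.
From mathcomp Require Import all_boot all_algebra.
From mathcomp Require Import boolp classical_sets functions.
Local Open Scope ring_scope.
Import GRing.Theory.

Section U.
Variables (R : comNzRingType) (F : npuf).

Lemma ulimD a b : ulim F (a + b : seqR R) = ulim F a + ulim F b.
Proof. by rewrite /ulim rmorphD. Qed.
Lemma ulimM a b : ulim F (a * b : seqR R) = ulim F a * ulim F b.
Proof. by rewrite /ulim rmorphM. Qed.
Lemma ulim0 : ulim F (0 : seqR R) = 0.
Proof. by rewrite /ulim rmorph0. Qed.
Lemma ulimX a k : ulim F (a ^+ k : seqR R) = ulim F a ^+ k.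
Proof. by rewrite /ulim rmorphXn. Qed.
Lemma ulim_surj (x : ultrapower R F) : exists a, x = ulim F a.
Proof. by exists (repr x); rewrite /ulim reprK. Qed.
Lemma ulim_eq (a b : nat -> R) : ulim F a = ulim F b -> F (fun n => a n = b n).
Proof.
move=> h.
have : ((a : seqR R) - b) \in nullseq F.
  by rewrite (@Quotient.idealrBE _ (nullseq F)); apply/eqP.
move=> /asboolP H; apply: (uf_up H) => n /= /eqP.
have -> : ((a : seqR R) - b) n = a n - b n by [].
by rewrite subr_eq0 => /eqP.
Qed.

Lemma seqX (f : nat -> R) k n : ((f : seqR R) ^+ k) n = f n ^+ k.
Proof. by elim: k => [|k IH]; rewrite ?expr0 // !exprS -IH. Qed.
End U.

Lemma span_cons (S : comNzRingType) (A : S -> Prop) c y r :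
  A y -> ideal_span A r -> ideal_span A (c * y + r).
Proof.
move=> Ay [s [hs ->]]; exists ((c, y) :: s); split; last by rewrite big_cons.
by move=> pr; rewrite inE => /orP [/eqP -> //|]; apply: hs.
Qed.

Lemma span0 (S : comNzRingType) (A : S -> Prop) : ideal_span A 0.
Proof. by exists [::]; split => //; rewrite big_nil. Qed.

Lemma frob_step (S : comNzRingType) p (I : S -> Prop) q r :
  p \in [pchar S] -> frob_pow I q r -> frob_pow I (q * p) (r ^+ p).
Proof.
move=> chp [s [hs ->]]; clear r.
elim: s hs => [|[c y] s IH] hs.
  have p0 := prime_gt0 (pcharf_prime chp).
  by rewrite big_nil expr0n eqn0Ngt p0 /=; apply: span0.
rewrite big_cons -!(pFrobenius_autE chp) rmorphD rmorphM /=.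
rewrite !pFrobenius_autE; apply: span_cons.
  have [z [Iz hz]] := hs (c, y) (mem_head _ _); rewrite /= in hz; rewrite hz.
  by exists z; split => //; rewrite -exprM.
rewrite -(pFrobenius_autE chp); apply: IH => pr h; apply: hs; by rewrite inE h orbT.
Qed.

Lemma frob_iter (S : comNzRingType) p (I : S -> Prop) e r :
  p \in [pchar S] -> frob_pow I (p ^ e) (r ^+ (p ^ e)) ->
  forall e', (e <= e')%N -> frob_pow I (p ^ e') (r ^+ (p ^ e')).
Proof.
move=> chp h e' /subnK <-; elim: (e' - e)%N => [|k IH]; first by rewrite add0n.
by rewrite addSn expnS mulnC exprM; apply: frob_step.
Qed.

Theorem lemma4p3 (R : comNzRingType) (p N : nat) (I : nat -> R -> Prop) (F : npuf) :
  noetherian R ->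
  p \in [pchar R] ->
  (forall n, generated_by_N N (I n)) ->
  forall x : ultrapower R F,
    frob_closure p (ulim_ideal F I) x ->
    ulim_ideal F (fun n => frob_closure p (I n)) x.
Proof.
move=> _ chp _ x [e0 He].
have := He e0 (leqnn _); set q := (p ^ e0)%N; case=> s [hs hx].
have key : forall s : seq (ultrapower R F * ultrapower R F),
  (forall pr, pr \in s -> exists r, ulim_ideal F I r /\ pr.2 = r ^+ q) ->
  exists b : nat -> R, \sum_(pr <- s) pr.1 * pr.2 = ulim F b /\
     F (fun n => frob_pow (I n) q (b n)).
  elim => [|[c z] t IH] ht.
    exists 0; rewrite big_nil ulim0; split => //.
    by apply: (uf_up (uf_full F)) => n _; apply: span0.
  have [w [[bw [-> Fw]] hz]] := ht (c, z) (mem_head _ _); rewrite /= in hz.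
  have [cc ->] := @ulim_surj R F c.
  have [b [hb Fb]] : exists b : nat -> R, \sum_(pr <- t) pr.1 * pr.2 = ulim F b /\
     F (fun n => frob_pow (I n) q (b n)).
    by apply: IH => pr h; apply: ht; rewrite inE h orbT.
  exists ((cc : seqR R) * bw ^+ q + b); rewrite big_cons hb /= hz ulimD ulimM ulimX.
  split => //; apply: (uf_up (uf_cap Fw Fb)) => n [h1 h2].
  have -> : ((cc : seqR R) * bw ^+ q + b) n = cc n * (((bw : seqR R) ^+ q) n) + b n by [].
  rewrite seqX; apply: span_cons => //; exists (bw n); split => //.
have [b [hb Fb]] := key s hs.
move: hx; have [a ->] := @ulim_surj R F x.
rewrite hb -(@ulimX R F) => /ulim_eq Fe.
exists a; split => //.
apply: (uf_up (uf_cap Fe Fb)) => n [h1 h2]; exists e0; apply: frob_iter => //.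
by rewrite -seqX h1.
Qed.
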